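(* Let $\mathcal{L}=(n,\mathcal{M},\mathcal{C})$ be a simple linearization and let $\mathcal{T}\subseteq\mathcal{P}$. Suppose $D(\mathcal{L})$ has a subgraph satisfying (a) its underlying undirected graph is a cycle and (b) its node set is contained in $\mathrm{succ}(\mathcal{T})$. Then $D(\mathcal{L})$ has a subgraph $Z$ satisfying (a) and (b) such that either $|U(Z)|=1$, or $Z$ satisfies all of the following: (c) for all $s\in\mathcal{S}$ and $t\in\mathcal{T}$ there is at most one directed $t$-$s$-path in $D(\mathcal{L})$; (d) $|\mathrm{pred}(s)\cap L(Z)|\le1$ for all $s\in\mathcal{S}$; (e) $|\mathrm{succ}(t)\cap U(Z)|\le1$ for all $t\in\mathcal{T}$.
   Context: $[n]=\{1,\dots,n\}$; a monomial is a nonempty subset of $[n]$; $\mathcal{S}=\{\{i\}:i\in[n]\}$. A linearization is a triple $\mathcal{L}=(n,\mathcal{M},\mathcal{C})$, where $\mathcal{M}$ is a set of monomials with $\mathcal{S}\subseteq\mathcal{M}$ and $\mathcal{C}$ is a set of AND-constraints; each AND-constraint is a set $c\subseteq\mathcal{M}$ whose union $\bigcup c$ (resultant) lies in $\mathcal{M}$. $\mathcal{P}=\mathcal{M}\setminus\mathcal{S}$. Linearizations are consistent: each $m\in\mathcal{P}$ is the resultant of some $c$ with $|m'|<|m|$ for all $m'\in c$. $\mathcal{L}$ is simple if each proper monomial is the resultant of exactly one AND-constraint and $|\mathcal{C}|=|\mathcal{P}|$. $D(\mathcal{L})$ has node set $\mathcal{M}$ and, for each $c\in\mathcal{C}$,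 arcs from $\bigcup c$ to each $m\in c$. Cycles are simple cycles. $\mathrm{succ}(W)$ (resp. $\mathrm{pred}(W)$) is the set of nodes of $D(\mathcal{L})$ reachable from (resp. from which one can reach) a node of $W$ by a directed path, including $W$; for a node $w$, $\mathrm{succ}(w)=\mathrm{succ}(\{w\})$ and $\mathrm{pred}(w)=\mathrm{pred}(\{w\})$. For a subgraph $Z$, $U(Z)$ is the set of nodes with out-degree at least $2$ in $Z$ (upper nodes) and $L(Z)$ the set of nodes with in-degree at least $2$ in $Z$ (lower nodes). *)

(* Defs.v *)
(* Variables [n] are 'I_n (0-based); a monomial is a
   {set 'I_n}; nodes of D(L) are monomials. *)
From mathcomp Require Import all_boot.
Set Implicit Arguments. Unset Strict Implicit. Unset Printing Implicit Defensive.

Section Defs.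
Variable n : nat.
Notation mono := {set 'I_n}.

Definition resultant (c : {set mono}) : mono := \bigcup_(m in c) m.

Definition Sing : {set mono} := [set [set i] | i : 'I_n].

Definition Proper (M : {set mono}) : {set mono} := M :\: Sing.

Definition is_linearization (M : {set mono}) (C : {set {set mono}}) : Prop :=
  (forall m, m \in M -> m != set0) /\
  Sing \subset M /\
  (forall c, c \in C -> c \subset M /\ resultant c \in M).

Definition consistent (M : {set mono}) (C : {set {set mono}}) : Prop :=
  forall m, m \in Proper M ->
    exists2 c, c \in C & resultant c = m /\ (forall m', m' \in c -> #|m'| < #|m|).

Definition simple_lin (M : {set mono}) (C : {set {set mono}}) : Prop :=
  (forall m, m \in Proper M -> #|[set c in C | resultant c == m]| = 1) /\
  #|C| = #|Proper M|.

Definition arc (C : {set {set mono}}) : rel mono :=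
  fun u v => [exists c in C, (resultant c == u) && (v \in c)].

Definition succW (C : {set {set mono}}) (W : {set mono}) : {set mono} :=
  [set v | [exists w in W, connect (arc C) w v]].
Definition predw (C : {set {set mono}}) (w : mono) : {set mono} :=
  [set u | connect (arc C) u w].

(* directed (simple) path t = x0 -> x1 -> ... -> xk = s, given by t and the
   sequence p = [x1; ...; xk] *)
Definition dpath (C : {set {set mono}}) (t : mono) (p : seq mono) (s : mono) : bool :=
  [&& path (arc C) t p, last t p == s & uniq (t :: p)].

Definition subgraph (M : {set mono}) (C : {set {set mono}})
  (VZ : {set mono}) (AZ : {set (mono * mono)}) : Prop :=
  VZ \subset M /\
  (forall u v, (u, v) \in AZ -> [/\ arc C u v, u \in VZ & v \in VZ]).

Definition und_cycle (VZ : {set mono}) (AZ : {set (mono * mono)}) : Prop :=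
  exists s : seq mono,
    [/\ uniq s, 3 <= size s, VZ = [set x in s],
        (forall u v, (u, v) \in AZ -> (v, u) \notin AZ) &
        (forall u v, ((u, v) \in AZ) || ((v, u) \in AZ) =
                     [&& u \in s, v \in s & (next s u == v) || (next s v == u)])].

Definition upper (VZ : {set mono}) (AZ : {set (mono * mono)}) : {set mono} :=
  [set v in VZ | 2 <= #|[set w | (v, w) \in AZ]|].
Definition lower (VZ : {set mono}) (AZ : {set (mono * mono)}) : {set mono} :=
  [set v in VZ | 2 <= #|[set w | (w, v) \in AZ]|].

End Defs.

(* Main.v *)
Require Import Defs.
From Stdlib Require Import Classical_Prop.
From mathcomp Require Import all_boot zify.
Set Implicit Arguments. Unset Strict Implicit. Unset Printing Implicit Defensive.

Section SeqLemmas.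
Variable T : eqType.
Implicit Types (s l r : seq T) (v w x y z : T).

Lemma next_rotE s i v w t : uniq s -> rot i s = v :: w :: t -> next s v = w.
Proof. by move=> Us Hr; rewrite -(next_rot i Us) Hr /= eqxx. Qed.

Lemma prev_rotE s i v w t : uniq s -> rot i s = w :: v :: t -> prev s v = w.
Proof. by move=> Us Hr; rewrite -(prev_rot i Us) Hr /= eqxx. Qed.

Lemma nextL l r v w : uniq (l ++ v :: w :: r) -> next (l ++ v :: w :: r) v = w.
Proof. by move=> U; apply: (next_rotE (i := size l) U); rewrite rot_size_cat. Qed.

Lemma nextW l v w : uniq (w :: l ++ [:: v]) -> next (w :: l ++ [:: v]) v = w.
Proof.
move=> U; apply: (next_rotE (i := size (w :: l)) U).
by rewrite -cat_cons rot_size_cat.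
Qed.

Lemma prevL l r v w : uniq (l ++ w :: v :: r) -> prev (l ++ w :: v :: r) v = w.
Proof. by move=> U; apply: (prev_rotE (i := size l) U); rewrite rot_size_cat. Qed.

Lemma prev_head v t : uniq (v :: t) -> prev (v :: t) v = last v t.
Proof.
move=> U; rewrite prev_nth mem_head.
case/andP: U => vt _; have -> : index v t = size t.
  by apply/eqP; rewrite eqn_leq index_size leqNgt index_mem vt.
by rewrite -[size t]/((size (v :: t)).-1) nth_last.
Qed.

Lemma next_neq_prev s v : uniq s -> 2 < size s -> v \in s -> next s v != prev s v.
Proof.
move=> Us Hs /rot_to [i t Hr].
have Ur : uniq (v :: t) by rewrite -Hr rot_uniq.
have St : 1 < size t by move: Hs; rewrite -(size_rot i) Hr.
case: t St Hr Ur => [|a [|b t]] // _ Hr Ur.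
rewrite (next_rotE Us Hr) -(prev_rot i Us) Hr prev_head //=.
case/andP: Ur => _ /andP [] Hab _; apply/eqP => E.
by move: Hab; rewrite E mem_last.
Qed.

Lemma last_eq_cat x p l z b : x :: p = l ++ z :: b -> last x p = last z b.
Proof.
move=> E; have -> : last x p = last x (x :: p) by [].
by rewrite E last_cat.
Qed.

Definition diverge (b1 b2 : seq T) :=
  if b1 is y1 :: _ then (if b2 is y2 :: _ then y1 != y2 else true) else true.

Lemma split_common x p1 p2 : exists l z b1 b2,
  [/\ x :: p1 = l ++ z :: b1, x :: p2 = l ++ z :: b2 & diverge b1 b2].
Proof.
elim: p1 x p2 => [|y p1 IH] x p2.
  by exists [::], x, [::], p2.
case: p2 => [|y' p2]; first by exists [::], x, (y :: p1), [::].
have [<-|ne] := eqVneq y y'.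
  have [l [z [b1 [b2 [E1 E2 D]]]]] := IH y p2.
  by exists (x :: l), z, b1, b2; rewrite /= -E1 -E2.
by exists [::], x, (y :: p1), (y' :: p2).
Qed.

Lemma diverge_disj b1 b2 : diverge b1 b2 ->
  (forall y l1 l2 r1 r2, b1 = l1 ++ y :: r1 -> b2 = l2 ++ y :: r2 -> l1 = l2) ->
  ~~ has (mem b1) b2.
Proof.
move=> D H; apply/hasPn => y yb2; apply/negP => yb1.
case/splitPr: yb1 D H => l1 r1.
case/splitPr: yb2 => l2 r2 D H.
have E := H y l1 l2 r1 r2 erefl erefl; subst l2.
by case: l1 D {H} => [|a l1] /=; rewrite eqxx.
Qed.

Lemma exists_max (f : T -> nat) s : s != [::] ->
  exists2 v, v \in s & forall w, w \in s -> f w <= f v.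
Proof.
elim: s => [|a s IH] //= _.
case: (eqVneq s [::]) => [->|ne].
  by exists a; rewrite ?mem_head // => w; rewrite inE => /eqP ->.
have [v vs Hv] := IH ne.
case: (leqP (f a) (f v)) => H.
  exists v; first by rewrite inE vs orbT.
  by move=> w; rewrite inE => /orP [/eqP ->|/Hv].
exists a; first by rewrite mem_head.
move=> w; rewrite inE => /orP [/eqP ->//|/Hv H2]; exact: leq_trans H2 (ltnW H).
Qed.

Lemma count_split (g h : pred T) s :
  count g s = count (fun v => g v && h v) s + count (fun v => g v && ~~ h v) s.
Proof.
elim: s => [|a s IH] //=; rewrite IH.
by case: (g a); case: (h a); rewrite /= ?add0n ?addnS ?addSn.
Qed.

End SeqLemmas.


Section Lin.
Variable n : nat.
Notation mono := {set 'I_n}.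
Variables (M : {set mono}) (C : {set {set mono}}) (T : {set mono}).
Hypotheses (HL : is_linearization M C) (HC : consistent M C) (HS : simple_lin M C)
  (HT : T \subset Proper M).

Notation arcC := (Defs.arc C).
Notation succT := (succW C T).

Lemma res_proper c : c \in C -> resultant c \in Proper M.
Proof.
move=> cC.
set K := [set c in C | resultant c \in Proper M].
have HK : #|K| = #|C|.
  rewrite HS.2 -[#|K|]sum1_card (partition_big (@resultant n) (mem (Proper M))); last first.
    by move=> i; rewrite inE => /andP [].
  rewrite -[#|Proper M|]sum1_card.
  apply: eq_bigr => m mP; rewrite -[RHS](HS.1 m mP).
  transitivity (\sum_(i | (i \in K) && (resultant i == m)) 1)%N.
  exact: (congr_big _ _ _ erefl (fun _ => erefl) (fun _ _ => erefl)).
  rewrite sum1dep_card.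
  apply: eq_card => c'; rewrite !inE.
  case: (c' \in C) => //=; case: eqP => [->|] //=.
  by rewrite andbT; move: mP; rewrite !inE.
  by rewrite andbF.
have : K = C.
  apply/eqP; rewrite eqEcard HK leqnn andbT.
  by apply/subsetP => x; rewrite inE => /andP [].
by move/setP/(_ c); rewrite inE cC /= => ->.
Qed.

Lemma arc_lt u v : arcC u v -> #|v| < #|u|.
Proof.
case/existsP => c /and3P [cC /eqP ru vc].
have uP : u \in Proper M by rewrite -ru res_proper.
have [c' c'C [rc' Hc']] := HC uP.
have /cards1P [c0 E] : #|[set c in C | resultant c == u]| == 1 by rewrite (HS.1 u uP).
have : c \in [set c in C | resultant c == u] by rewrite inE cC ru eqxx.
have : c' \in [set c in C | resultant c == u] by rewrite inE c'C rc' eqxx.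
rewrite E !inE => /eqP Ec /eqP Ec2.
by apply: Hc'; rewrite Ec -Ec2.
Qed.

Lemma arc_M u v : arcC u v -> v \in M.
Proof.
case/existsP => c /and3P [cC _ vc].
have [_ [_ H]] := HL; have [/subsetP sub _] := H c cC; exact: sub.
Qed.

Lemma conn_M u v : connect arcC u v -> u \in M -> v \in M.
Proof.
case/connectP => p Hp ->; elim: p u Hp => [|a p IH] u //= /andP [ua Hp] _.
by apply: IH Hp (arc_M ua).
Qed.

Lemma succT_conn u v : u \in succT -> connect arcC u v -> v \in succT.
Proof.
rewrite !inE => /existsP [w /andP [wT cwu]] cuv; apply/existsP; exists w.
by rewrite wT (connect_trans cwu cuv).
Qed.

Lemma succT_M v : v \in succT -> v \in M.
Proof.
rewrite inE => /existsP [w /andP [wT cwv]]; apply: conn_M cwv _.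
by move/subsetP: HT => /(_ w wT); rewrite inE => /andP [].
Qed.

Lemma T_succT t : t \in T -> t \in succT.
Proof. by move=> tT; rewrite inE; apply/existsP; exists t; rewrite tT connect0. Qed.

Definition adjA (a b : mono) := arcC a b || arcC b a.

Lemma adjA_sym a b : adjA a b = adjA b a.
Proof. by rewrite /adjA orbC. Qed.

Definition cyc (s : seq mono) :=
  [&& uniq s, 2 < size s, cycle adjA s & all (fun v => v \in succT) s].

Definition flip (a b : mono) := arcC b a.

Lemma cyc_rot i s : cyc (rot i s) = cyc s.
Proof.
rewrite /cyc rot_uniq size_rot rot_cycle; congr [&& _, _, _ & _].
by apply: eq_all_r; exact: mem_rot.
Qed.

Section Gen.
Variables (e : rel mono) (r : mono -> nat).
Hypothesis er : forall a b, e a b -> r b < r a.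
Hypothesis eadj : forall a b, adjA a b = e a b || e b a.

Lemma e_asym a b : e a b -> ~~ e b a.
Proof. move=> H; apply/negP => /er; rewrite ltnNge ltnW //; exact: er H. Qed.

Lemma e_adj a b : e a b -> adjA a b.
Proof. by rewrite eadj => ->. Qed.

Lemma e_adj' a b : e a b -> adjA b a.
Proof. by rewrite eadj => ->; rewrite orbT. Qed.

Lemma path_uniq x p : path e x p -> uniq (x :: p).
Proof.
move=> H; apply: (@sorted_uniq _ [rel a b | r b < r a]).
- by move=> a b c /= H1 H2; apply: ltn_trans H2 H1.
- by move=> a /=; rewrite ltnn.
by rewrite /=; apply: sub_path H => a b /er.
Qed.

Lemma path_conn x p v : path e x p -> v \in x :: p -> connect e x v /\ connect e v (last x p).
Proof.
move=> Hp; rewrite inE => /orP [/eqP ->|]; first by split; [exact: connect0| apply/connectP; exists p].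
move=> vp; move: Hp; case/splitPr: vp => l rr; rewrite cat_path /= => /and3P [H1 H2 H3].
split; first by apply/connectP; exists (l ++ [:: v]); rewrite ?cat_path ?H1 /= ?H2 // last_cat.
by apply/connectP; exists rr; rewrite // last_cat.
Qed.

Definition tops (s : seq mono) : {set mono} :=
  [set v | [&& v \in s, e v (next s v) & e v (prev s v)]].

Lemma tops_rot i s : uniq s -> tops (rot i s) = tops s.
Proof. by move=> U; apply/setP => v; rewrite !inE mem_rot next_rot ?prev_rot. Qed.

Lemma top_exists s : cyc s -> exists v, v \in tops s.
Proof.
case/and4P => U S Cy _.
have [v vs Hv] : exists2 v, v \in s & forall w, w \in s -> r w <= r v.
  by apply: exists_max; case: s S {U Cy}.
exists v; rewrite inE vs /=.
have H1 := next_cycle Cy vs; have H2 := prev_cycle Cy vs.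
rewrite eadj in H1; rewrite eadj in H2.
case/orP: H1 => [->|/er]; last by rewrite ltnNge Hv // mem_next.
case/orP: H2 => [/er|->//]; by rewrite ltnNge Hv // mem_prev.
Qed.

End Gen.


Lemma arc_rank a b : arcC a b -> #|b| < #|a|.
Proof. exact: arc_lt. Qed.

Lemma flip_rank a b : flip a b -> n.+1 - #|b| < n.+1 - #|a|.
Proof.
rewrite /flip => /arc_lt H.
have Hb : #|b| <= n by have := subset_leq_card (subsetT b); rewrite cardsT card_ord.
lia.
Qed.

Lemma arc_adj a b : adjA a b = arcC a b || arcC b a.
Proof. by []. Qed.

Lemma flip_adj a b : adjA a b = flip a b || flip b a.
Proof. by rewrite /flip orbC. Qed.

Lemma card_cnt (s : seq mono) (P : pred mono) : uniq s ->
  #|[set v | (v \in s) && P v]| = count P s.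
Proof.
move=> U; rewrite -size_filter -(card_uniqP (filter_uniq P U)).
by apply: eq_card => v; rewrite inE mem_filter andbC.
Qed.

Lemma up_eq_low s : cyc s -> #|tops arcC s| = #|tops flip s|.
Proof.
case/and4P => U S Cy _.
pose g v := arcC v (next s v).
have E1 : tops arcC s = [set v | (v \in s) && (g v && ~~ g (prev s v))].
  apply/setP => v; rewrite !inE /g next_prev //.
  case vs: (v \in s) => //=.
  have := prev_cycle Cy vs; rewrite /adjA.
  case H: (arcC (prev s v) v) => /=.
    by move=> _; rewrite (negbTE (e_asym arc_rank H)) !andbF.
  by move=> ->; rewrite !andbT.
have E2 : tops flip s = [set v | (v \in s) && (~~ g v && g (prev s v))].
  apply/setP => v; rewrite !inE /g /flip next_prev //.
  case vs: (v \in s) => //=.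
  have := next_cycle Cy vs; rewrite /adjA.
  case H: (arcC v (next s v)) => /=.
    by move=> _; rewrite (negbTE (e_asym arc_rank H)).
  by move=> ->.
rewrite E1 E2 !card_cnt //.
have Hp : count g s = count (fun v => g (prev s v)) s.
  rewrite -(count_map (prev s) g); apply/permP/uniq_perm => //.
    by rewrite map_inj_in_uniq // => a b _ _ /(can_inj (next_prev U)).
  move=> v; apply/idP/mapP => [vs|[w ws ->]]; last by rewrite mem_prev.
  by exists (next s v); rewrite ?mem_next // prev_next.
move: Hp; rewrite (count_split g (fun v => g (prev s v))).
rewrite [count (fun v => g (prev s v)) s](count_split _ g).
rewrite (eq_count (a1 := fun v => g (prev s v) && g v) (a2 := fun v => g v && g (prev s v))); last by move=> v; rewrite andbC.
rewrite (eq_count (a1 := fun v => g (prev s v) && ~~ g v) (a2 := fun v => ~~ g v && g (prev s v))); last by move=> v; rewrite andbC.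
by move/eqP; rewrite eqn_add2l => /eqP.
Qed.

Lemma mid_nextprev (O R' b1 b2 : seq mono) (q z v : mono) :
  uniq (O ++ q :: R') -> uniq (z :: b1 ++ O ++ rev b2) ->
  last z b1 = last q R' -> last z b2 = q -> v \in O ->
  next (z :: b1 ++ O ++ rev b2) v = next (O ++ q :: R') v /\
  prev (z :: b1 ++ O ++ rev b2) v = prev (O ++ q :: R') v.
Proof.
move=> U1 U2 E1 E2 vO; move: U1 U2; case/splitPr: vO => l rr U1 U2.
split.
  case: rr U1 U2 => [|w rr] U1 U2.
    have E : (l ++ [:: v]) ++ q :: R' = l ++ v :: q :: R' by rewrite -catA.
    rewrite E in U1 *; rewrite (nextL U1).
    case/lastP: b2 E2 U2 => [|b2 y] E2 U2.
      rewrite /= in E2; subst z.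
      have E' : q :: b1 ++ (l ++ [:: v]) ++ rev [::] = q :: (b1 ++ l) ++ [:: v].
        by rewrite cats0 catA.
      by rewrite E' nextW -?E'.
    rewrite last_rcons in E2; subst y.
    have E' : z :: b1 ++ (l ++ [:: v]) ++ rev (rcons b2 q) = (z :: b1 ++ l) ++ v :: q :: rev b2.
      by rewrite rev_rcons /= -!catA.
    by rewrite E' in U2 *; rewrite (nextL U2).
  have E : (l ++ v :: w :: rr) ++ q :: R' = l ++ v :: w :: (rr ++ q :: R') by rewrite -catA.
  have E' : z :: b1 ++ (l ++ v :: w :: rr) ++ rev b2 = (z :: b1 ++ l) ++ v :: w :: (rr ++ rev b2).
    by rewrite /= -!catA.
  by rewrite E in U1 *; rewrite E' in U2 *; rewrite (nextL U1) (nextL U2).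
case/lastP: l U1 U2 => [|l w] U1 U2.
  rewrite !cat0s cat_cons in U1 U2 *; rewrite [RHS](prev_head U1) [RHS]last_cat [RHS]/= -E1.
  have E' : z :: b1 ++ (v :: rr) ++ rev b2 = belast z b1 ++ last z b1 :: v :: (rr ++ rev b2).
    by rewrite -[RHS]cat_rcons -lastI.
  by rewrite E' in U2 *; rewrite (prevL U2).
have E : (rcons l w ++ v :: rr) ++ q :: R' = l ++ w :: v :: (rr ++ q :: R') by rewrite cat_rcons -catA.
have E' : z :: b1 ++ (rcons l w ++ v :: rr) ++ rev b2 = (z :: b1 ++ l) ++ w :: v :: (rr ++ rev b2).
  by rewrite cat_rcons /= -!catA.
by rewrite E in U1 *; rewrite E' in U2 *; rewrite (prevL U1) (prevL U2).
Qed.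

Section Gen2.
Variables (e : rel mono) (r : mono -> nat).
Hypothesis er : forall a b, e a b -> r b < r a.
Hypothesis eadj : forall a b, adjA a b = e a b || e b a.

Lemma shape_b1 z b1 rest v : uniq (z :: b1 ++ rest) -> path e z b1 -> v \in b1 ->
  e (prev (z :: b1 ++ rest) v) v.
Proof.
move=> U Hp vb; move: U Hp; case/splitPr: vb => l rr U Hp.
have E : z :: (l ++ v :: rr) ++ rest = belast z l ++ last z l :: v :: (rr ++ rest).
  by rewrite -[RHS]cat_rcons -lastI /= -catA.
rewrite E prevL -?E //.
by move: Hp; rewrite cat_path => /andP [_] /= /andP [].
Qed.

Lemma shape_b2 z mid b2 v : uniq (z :: mid ++ rev b2) -> path e z b2 -> v \in b2 ->
  e (next (z :: mid ++ rev b2) v) v.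
Proof.
move=> U Hp vb; move: U Hp; case/splitPr: vb => l rr U Hp.
have He : e (last z l) v by move: Hp; rewrite cat_path => /andP [_] /= /andP [].
move: U; rewrite rev_cat rev_cons; case/lastP: l He Hp => [|l0 y] He Hp U.
  have E : z :: mid ++ rcons (rev rr) v ++ rev [::] = z :: (mid ++ rev rr) ++ [:: v].
    by rewrite cats0 -cats1 catA.
  by rewrite E nextW -?E.
have E : z :: mid ++ rcons (rev rr) v ++ rev (rcons l0 y) = (z :: mid ++ rev rr) ++ v :: y :: rev l0.
  by rewrite rev_rcons -cats1 /= -!catA.
by rewrite E nextL -?E //; rewrite last_rcons in He.
Qed.

Lemma shape_cycle z b1 O b2 : path e z b1 -> path e z b2 ->
  path adjA (last z b1) (O ++ [:: last z b2]) -> cycle adjA (z :: b1 ++ O ++ rev b2).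
Proof.
move=> P1 P2 PO.
have E : rcons (b1 ++ O ++ rev b2) z = b1 ++ (O ++ [:: last z b2]) ++ rev (belast z b2).
  by rewrite !rcons_cat -rev_cons lastI rev_rcons -catA.
rewrite /= E cat_path (sub_path _ P1) /=; last by move=> a b; rewrite eadj => ->.
rewrite cat_path PO /= last_cat /= rev_path.
by apply: sub_path P2 => a b H; rewrite eadj H orbT.
Qed.

Lemma surgery (D : pred mono) O q R' z b1 b2 u u' :
  cyc (O ++ q :: R') -> O != [::] -> all (fun v => ~~ D v) O ->
  path e z b1 -> path e z b2 -> last z b1 = last q R' -> last z b2 = q ->
  uniq (z :: b1 ++ b2) -> all D (z :: b1 ++ b2) ->
  all (fun v => v \in succT) (z :: b1 ++ b2) ->
  u \in tops e (O ++ q :: R') -> u' \in tops e (O ++ q :: R') -> D u -> D u' -> u != u' ->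
  exists s', cyc s' /\ #|tops e s'| < #|tops e (O ++ q :: R')|.
Proof.
set s := O ++ q :: R'.
move=> Cyc On ODn P1 P2 E1 E2 Ub AD AS uT u'T Du Du' uu'.
case/and4P: (Cyc) => Us Ss Cs As.
have notO : forall v, D v -> v \notin O.
  by move=> v Dv; apply/negP => vO; move/allP: ODn => /(_ v vO); rewrite Dv.
have inR : forall v, v \in tops e s -> D v -> v \in q :: R'.
  move=> v; rewrite inE => /andP [vs _] Dv; move: vs; rewrite mem_cat.
  by rewrite (negbTE (notO v Dv)).
have pq : last q R' != q.
  have uR := inR u uT Du; have u'R := inR u' u'T Du'.
  have UR : uniq (q :: R') by move: Us; rewrite cat_uniq => /and3P [].
  case ER: R' uR u'R UR => [|a R''] uR u'R UR.
    move: uR u'R; rewrite !inE => /eqP Eu /eqP Eu'.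
    by rewrite Eu Eu' eqxx in uu'.
  move: UR; rewrite /= => /andP [qn _]; apply/eqP => E; move: qn; rewrite -E.
  by rewrite mem_last.
set s' := z :: b1 ++ O ++ rev b2.
have Us' : uniq s'.
  have Pm : perm_eq s' ((z :: b1 ++ b2) ++ O).
    rewrite /s' /= perm_cons -catA perm_cat2l perm_catC perm_cat2r.
    by rewrite perm_rev.
  rewrite (perm_uniq Pm) cat_uniq Ub /=.
  have -> : uniq O by move: Us; rewrite cat_uniq => /andP [].
  rewrite andbT; apply/hasPn => v vO; apply/negP => vin.
  by move/allP: AD => /(_ v vin) Dv; move: (notO v Dv); rewrite vO.
have Ss' : 2 < size s'.
  have sO : 0 < size O by case: (O) On.
  have sb : 0 < size b1 + size b2.
    case Eb1: b1 E1 => [|? ?] E1; last by [].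
    case Eb2: b2 E2 => [|? ?] E2; last by [].
    by rewrite /= in E1 E2; rewrite -E1 E2 eqxx in pq.
  rewrite /s' /= !size_cat size_rev ltnS addnCA; exact: leq_add sO sb.
have Cs' : cycle adjA s'.
  apply: shape_cycle => //; rewrite E1 E2.
  move: Cs; rewrite (cycle_path q) /s last_cat /=.
  by rewrite -[O ++ q :: R']/(O ++ [:: q] ++ R') catA cat_path => /andP [].
have As' : all (fun v => v \in succT) s'.
  rewrite /s' /= all_cat all_cat all_rev.
  move: AS; rewrite /= all_cat => /and3P [-> -> ->].
  by move: As; rewrite all_cat => /andP [->].
exists s'; split; first by rewrite /cyc Us' Ss' Cs' As'.
set X := tops e s :&: [set v | v \in O].
have sub : tops e s' \subset z |: X.
  apply/subsetP => v; rewrite !inE => /and3P [vs' Hn Hp].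
  case: (eqVneq v z) => [//|vz /=].
  move: vs'; rewrite (negbTE vz) /= !mem_cat mem_rev.
  case/or3P => [vb1|vO|vb2].
  - have := shape_b1 Us' P1 vb1; rewrite -/s' => H.
    by rewrite (negbTE (e_asym er H)) in Hp.
  - have [Hn' Hp'] := mid_nextprev Us Us' E1 E2 vO.
    by rewrite -/s' in Hn' Hp'; rewrite vO /= -Hn' -Hp' Hn Hp.
  - have Us'' : uniq (z :: (b1 ++ O) ++ rev b2) by rewrite -catA.
    have := shape_b2 Us'' P2 vb2; rewrite -catA -/s' => H.
    by rewrite (negbTE (e_asym er H)) in Hn.
have sup : u |: (u' |: X) \subset tops e s.
  apply/subsetP => v; rewrite !inE => /or3P [/eqP ->|/eqP ->|/andP [] //].
    by move: uT; rewrite inE.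
  by move: u'T; rewrite inE.
have c1 := subset_leq_card sub; have c2 := subset_leq_card sup.
move: c1 c2; rewrite !cardsU1.
have -> : u' \notin X by rewrite !inE (negbTE (notO u' Du')) andbF.
have -> : u \notin u' |: X by rewrite !inE negb_or uu' /= (negbTE (notO u Du)) andbF.
move=> c1 c2; apply: leq_ltn_trans c1 _; apply: leq_trans c2.
by case: (z \notin X).
Qed.

End Gen2.



Lemma all_take_find (a : pred mono) (s : seq mono) : all (predC a) (take (find a s) s).
Proof. by elim: s => //= x s IH; case Hx: (a x) => //=; rewrite Hx IH. Qed.

Lemma rot_split (P : seq mono -> Prop) (D : pred mono) s x y :
  P s -> (forall i s, P s -> P (rot i s)) -> x \in s -> D x -> y \in s -> ~~ D y ->
  exists O q R', [/\ P (O ++ q :: R'), O != [::], all (fun v => ~~ D v) O, D q & D (last q R')].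
Proof.
move=> Ps Prot xs Dx ys Dy.
have [j s0 Hr] := rot_to xs.
set s1 := rcons s0 x.
have Ps1 : P s1.
  by rewrite /s1 -rot1_cons -Hr; apply: (Prot 1 _ (Prot j s Ps)).
have ys1 : y \in s1 by rewrite /s1 -rot1_cons -Hr !mem_rot.
set i := find (predC D) s1.
have hi : has (predC D) s1 by apply/hasP; exists y.
set A := take i s1; set B := drop i s1.
have PBA : P (B ++ A).
  have <- : rot i s1 = B ++ A by [].
  exact: (Prot i _ Ps1).
have iS : i < size s1 by rewrite -has_find.
have AD : all D A.
  by apply/allP => v vA; move/allP: (all_take_find (predC D) s1) => /(_ v vA) /=; rewrite negbK.
have xB : x \in B.
  rewrite /B /s1 drop_rcons ?mem_rcons ?mem_head //.
  by move: iS; rewrite /s1 size_rcons ltnS.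
have lastB : last x B = x.
  rewrite /B /s1 drop_rcons ?last_rcons //.
  by move: iS; rewrite /s1 size_rcons ltnS.
have EB : B = nth x s1 i :: drop i.+1 s1 by rewrite /B (drop_nth x iS).
have Db0 : ~~ D (nth x s1 i) by have := nth_find x hi.
set k := find D B.
have hk : has D B by apply/hasP; exists x.
have kS : k < size B by rewrite -has_find.
have EB2 : B = take k B ++ nth x B k :: drop k.+1 B by rewrite -(drop_nth x kS) cat_take_drop.
exists (take k B), (nth x B k), (drop k.+1 B ++ A); split.
- by rewrite -cat_cons catA -EB2.
- by rewrite /k EB /= (negbTE Db0).
- exact: all_take_find.
- exact: nth_find.
rewrite last_cat.
case EA: A AD => [|a A'] AD /=.
  have E : last x B = last (nth x B k) (drop k.+1 B) by rewrite {1}EB2 last_cat.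
  by rewrite -E lastB.
by move/allP: AD; apply; rewrite mem_last.
Qed.

Definition OneUp := exists s, cyc s /\ #|tops arcC s| = 1.

Lemma path_suffix (e : rel mono) x p l z b : path e x p -> x :: p = l ++ z :: b -> path e z b.
Proof.
move=> Hp; case: l => [|a l] /= [Ex Ep]; first by rewrite -Ex -Ep.
by move: Hp; rewrite Ep cat_path => /andP [_] /= /andP [].
Qed.

Lemma path_prefix (e : rel mono) x l y r : path e x (l ++ y :: r) -> path e x (rcons l y).
Proof. by rewrite cat_path rcons_path => /andP [-> /= /andP [-> _]]. Qed.

Lemma diamond x y1 y2 p1 p2 : x \in succT -> path arcC x (y1 :: p1) -> path arcC x (y2 :: p2) ->
  y1 != y2 -> last y1 p1 = last y2 p2 -> OneUp.
Proof.
move=> xS P1 P2 y12 Elast.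
set q1 := y1 :: p1 in P1; set q2 := y2 :: p2 in P2.
have wq1 : last y1 p1 \in q1 by exact: mem_last.
have wq2 : last y1 p1 \in q2 by rewrite Elast mem_last.
set i := find (fun v => v \in q1) q2.
have hi : has (fun v => v \in q1) q2 by apply/hasP; exists (last y1 p1).
have iS : i < size q2 by rewrite -has_find.
set A := take i q2; set zm := nth x q2 i.
have Eq2 : q2 = A ++ zm :: drop i.+1 q2 by rewrite -(drop_nth x iS) cat_take_drop.
have zq1 : zm \in q1 := nth_find x hi.
have An : all (fun v => v \notin q1) A := all_take_find (fun v => v \in q1) q2.
set Cc := take (index zm q1) q1; set B1 := drop (index zm q1).+1 q1.
have Eq1 : q1 = Cc ++ zm :: B1.
  by rewrite /Cc /B1 -{1}(cat_take_drop (index zm q1) q1) (drop_nth x) ?index_mem // nth_index.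
rewrite Eq1 in P1.
clearbody Cc B1 A zm.
set s := x :: (rcons Cc zm) ++ [::] ++ rev A.
have PC : path arcC x (rcons Cc zm) := path_prefix P1.
have PA : path arcC x A by move: P2; rewrite Eq2 cat_path => /andP [].
have Jn : arcC (last x A) zm by move: P2; rewrite Eq2 cat_path => /andP [_] /= /andP [].
have UC := path_uniq arc_rank PC.
have UA := path_uniq arc_rank PA.
have Us : uniq s.
  have Pm : perm_eq s ((x :: rcons Cc zm) ++ A).
    by rewrite /s /= perm_cons perm_cat2l perm_rev.
  rewrite (perm_uniq Pm) cat_uniq UC.
  have /= /andP [xA UA'] := UA; rewrite UA' andbT.
  apply/hasPn => v vA; move/allP: An => /(_ v vA).
  apply: contra; rewrite inE mem_rcons inE => /or3P [/eqP E|/eqP E|vC].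
  - by move: xA; rewrite -E vA.
  - by rewrite E Eq1 mem_cat mem_head orbT.
  - by rewrite Eq1 mem_cat vC.
have Ss : 2 < size s.
  rewrite /s [size _]/= size_cat size_rcons size_rev addSn !ltnS.
  case ECc: Cc Eq1 => [|c Cc'] Eq1; last by [].
  case EA: A Eq2 => [|a A'] Eq2; last by [].
  move: Eq1 Eq2; rewrite /q1 /q2 /= => -[E1 _] [E2 _].
  by rewrite E1 E2 eqxx in y12.
have Pc : path adjA (last x (rcons Cc zm)) ([::] ++ [:: last x A]).
  by rewrite last_rcons /= andbT /adjA Jn orbT.
have Cs : cycle adjA s := shape_cycle arc_adj PC PA Pc.
have As : all (fun v => v \in succT) s.
  apply/allP => v; rewrite /s inE mem_cat mem_rev => /or3P [/eqP ->//|vC|vA].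
    by apply: succT_conn xS _; apply: (path_conn PC _).1; rewrite inE vC orbT.
  by apply: succT_conn xS _; apply: (path_conn PA _).1; rewrite inE vA orbT.
have cs : cyc s by rewrite /cyc Us Ss Cs As.
exists s; split => //.
have [v vt] := top_exists arc_rank arc_adj cs.
have sub : tops arcC s \subset [set x].
  apply/subsetP => w; rewrite !inE => /and3P [ws Hn Hp].
  move: ws; rewrite !mem_cat mem_rev => /or3P [//|wC|wA].
    have := shape_b1 Us PC wC => H.
    by rewrite (negbTE (e_asym arc_rank H)) in Hp.
  have Us' : uniq (x :: (rcons Cc zm ++ [::]) ++ rev A) by rewrite -catA.
  have := shape_b2 Us' PA wA; rewrite -catA -/s => H.
  by rewrite (negbTE (e_asym arc_rank H)) in Hn.
apply/eqP; rewrite eqn_leq (leq_trans (subset_leq_card sub)) ?cards1 //.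
by apply/card_gt0P; exists v.
Qed.

Lemma paths_uniq x p1 p2 : ~ OneUp -> x \in succT -> path arcC x p1 -> path arcC x p2 ->
  last x p1 = last x p2 -> p1 = p2.
Proof.
move=> NO; elim: p1 x p2 => [|y p1 IH] x [|y' p2] xS P1 P2 E //.
- have := path_uniq arc_rank P2; rewrite cons_uniq => /andP [].
  by have := mem_last y' p2; rewrite -[last y' p2]/(last x (y' :: p2)) -E => ->.
- have := path_uniq arc_rank P1; rewrite cons_uniq => /andP [].
  by have := mem_last y p1; rewrite -[last y p1]/(last x (y :: p1)) E => ->.
move: P1 P2 E => /= /andP [a1 P1] /andP [a2 P2] E.
have [Ey|ne] := eqVneq y y'.
  subst y'; congr (_ :: _); apply: IH P1 P2 E.
  by apply: succT_conn xS _; apply: connect1.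
exfalso; apply: NO; apply: (diamond xS (p1 := p1) (p2 := p2) _ _ ne E); rewrite /= ?a1 ?a2 //.
Qed.

Definition AZof (s : seq mono) : {set (mono * mono)} :=
  [set uv | [&& uv.1 \in s, uv.2 \in s, arcC uv.1 uv.2 & (next s uv.1 == uv.2) || (next s uv.2 == uv.1)]].

Lemma nb_eq (s : seq mono) (v w : mono) : uniq s -> v \in s ->
  [&& w \in s & (next s v == w) || (next s w == v)] = (w == next s v) || (w == prev s v).
Proof.
move=> U vs; rewrite [w == next s v]eq_sym.
case ws: (w \in s) => /=.
  congr (_ || _); apply/eqP/eqP => [<-|->]; [by rewrite prev_next|by rewrite next_prev].
apply/esym/negbTE; rewrite negb_or; apply/andP; split; apply/eqP => E; move: ws.
  by rewrite -E mem_next vs.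
by rewrite E mem_prev vs.
Qed.

Lemma conv s : cyc s -> [/\ subgraph M C [set x in s] (AZof s), und_cycle [set x in s] (AZof s),
  [set x in s] \subset succT, upper [set x in s] (AZof s) = tops arcC s &
  lower [set x in s] (AZof s) = tops flip s].
Proof.
move=> cs; case/and4P: (cs) => U S Cy As.
have sS : [set x in s] \subset succT.
  by apply/subsetP => v; rewrite inE => /(allP As).
have npd : forall v, v \in s -> next s v != prev s v by move=> v; apply: next_neq_prev.
split => //.
- split; first by apply/subsetP => v /(subsetP sS) /succT_M.
  by move=> u v; rewrite !inE /= => /and4P [-> -> -> _].
- exists s; split => //.
  + by move=> u v; rewrite !inE /= => /and4P [_ _ a _]; apply/negP => /and4P [_ _ b _]; move: (e_asym arc_rank a); rewrite b.
  + move=> u v; rewrite !inE /=.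
    case us: (u \in s); case vs: (v \in s) => //=.
    rewrite [(next s v == u) || _]orbC -andb_orl.
    case X: ((next s u == v) || (next s v == u)); rewrite ?andbF ?andbT //.
    case/orP: X => /eqP E.
      by have := next_cycle Cy us; rewrite E.
    by have := next_cycle Cy vs; rewrite E /adjA orbC.
- apply/setP => v; rewrite !inE.
  case vs: (v \in s) => //=.
  have -> : [set w | (v, w) \in AZof s] = [set w | (w \in [:: next s v; prev s v]) && arcC v w].
    apply/setP => w; rewrite !inE /= vs /=.
    have := nb_eq w U vs; rewrite andbC.
    case: (w \in s) => /=; last first.
      move=> <-; by rewrite !andbF.
    rewrite [arcC v w && _]andbC => <-.
    by rewrite andbT.
  rewrite card_cnt; last by rewrite /= inE npd.
  by rewrite /=; case: (arcC v (next s v)); case: (arcC v (prev s v)).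
apply/setP => v; rewrite !inE.
case vs: (v \in s) => //=.
have -> : [set w | (w, v) \in AZof s] = [set w | (w \in [:: next s v; prev s v]) && arcC w v].
  apply/setP => w; rewrite !inE /= vs /=.
  have := nb_eq w U vs; rewrite orbC.
  case: (w \in s) => /=; last first.
    by move=> <-.
  by move=> <-; rewrite andbC.
rewrite card_cnt; last by rewrite /= inE npd.
by rewrite /= /flip; case: (arcC (next s v) v); case: (arcC (prev s v) v).
Qed.

Lemma flip_conn a b : connect flip a b -> connect arcC b a.
Proof.
case/connectP => f Hf ->; apply/connectP; exists (rev (belast a f)); last first.
  by case/lastP: f Hf => [|f y] //= _; rewrite belast_rcons rev_cons last_rcons.
by rewrite rev_path.
Qed.

Lemma conn_flip a b : connect arcC a b -> exists f, path flip b f /\ last b f = a.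
Proof.
case/connectP => p Hp ->; exists (rev (belast a p)); split.
  by rewrite rev_path.
by case/lastP: p Hp => [|p y] //= _; rewrite belast_rcons rev_cons last_rcons.
Qed.

Definition Goal := exists (VZ : {set {set 'I_n}}) (AZ : {set ({set 'I_n} * {set 'I_n})}),
    [/\ subgraph M C VZ AZ, und_cycle VZ AZ, VZ \subset succW C T &
      #|upper VZ AZ| = 1 \/
      [/\ (forall s t, s \in Sing n -> t \in T ->
             forall p1 p2, dpath C t p1 s -> dpath C t p2 s -> p1 = p2),
          (forall s, s \in Sing n -> #|predw C s :&: lower VZ AZ| <= 1) &
          (forall t, t \in T -> #|succW C [set t] :&: upper VZ AZ| <= 1)]].

Lemma Prot_ok s0 : forall i s, (cyc s /\ tops arcC s = tops arcC s0 /\ tops flip s = tops flip s0) ->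
  (cyc (rot i s) /\ tops arcC (rot i s) = tops arcC s0 /\ tops flip (rot i s) = tops flip s0).
Proof.
move=> i s [cs [E1 E2]]; have U : uniq s by case/and4P: cs.
by rewrite cyc_rot !tops_rot.
Qed.

Lemma main_ind k : forall s, cyc s -> #|tops arcC s| = k -> Goal.
Proof.
elim/ltn_ind: k => k IH s cs hk.
apply: NNPP => NG.
have [sub und sS up lo] := conv cs.
have NO : ~ OneUp.
  move=> [s1 [c1 h1]]; apply: NG.
  have [sub1 und1 sS1 up1 lo1] := conv c1.
  by exists [set x in s1], (AZof s1); split => //; left; rewrite up1.
have smaller : forall s', cyc s' -> #|tops arcC s'| < k -> False.
  by move=> s' c' lt; apply: NG; apply: (IH _ lt s' c').
case/and4P: (cs) => Us Ss Cs As.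
have inS : forall v, v \in s -> v \in succT by move=> v /(allP As).
have Hc : forall s0 t, s0 \in Sing n -> t \in T ->
    forall p1 p2, dpath C t p1 s0 -> dpath C t p2 s0 -> p1 = p2.
  move=> s0 t _ tT p1 p2 /and3P [P1 /eqP E1 _] /and3P [P2 /eqP E2 _].
  by apply: (paths_uniq NO (T_succT tT) P1 P2); rewrite E1 E2.
apply: NG; exists [set x in s], (AZof s); split => //; right; split => //.
- rewrite lo => sg _; rewrite leqNgt; apply/negP => /card_gt1P [l [l' [Hl Hl' ll']]].
  move: Hl Hl'; rewrite !inE => /andP [cl lT] /andP [cl' l'T].
  pose D := fun v => (v \in succT) && connect arcC v sg.
  have ls : l \in s by case/and3P: lT.
  have l's : l' \in s by case/and3P: l'T.
  have Dl : D l by rewrite /D inS.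
  have Dl' : D l' by rewrite /D inS.
  have [u0 u0T] := top_exists arc_rank arc_adj cs.
  move: (u0T); rewrite inE => /and3P [u0s an ap].
  have [y ys Dy] : exists2 y, y \in s & ~~ D y.
    case Dn: (D (next s u0)); last by exists (next s u0); rewrite ?mem_next ?Dn.
    case Dp: (D (prev s u0)); last by exists (prev s u0); rewrite ?mem_prev ?Dp.
    exfalso; move: Dn Dp; rewrite /D => /andP [_ /connectP [pn Pn En]] /andP [_ /connectP [pp Pp Ep]].
    have E : next s u0 :: pn = prev s u0 :: pp.
      apply: (paths_uniq NO (inS _ u0s)); rewrite /= ?an ?ap //.
      by rewrite -En -Ep.
    case: E => E _; move: (next_neq_prev Us Ss u0s); by rewrite E eqxx.
  have [O [q [R' [[cs2 [Et1 Et2]] On ODn Dq Dp]]]] :=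
    rot_split (P := fun s2 => cyc s2 /\ tops arcC s2 = tops arcC s /\ tops flip s2 = tops flip s)
      (D := D) (conj cs (conj erefl erefl)) (Prot_ok (s0 := s)) ls Dl ys Dy.
  set p := last q R' in Dp.
  move: (Dq) (Dp); rewrite /D => /andP [qS cq] /andP [pS cp].
  have [fq [Pfq Lfq]] := conn_flip cq.
  have [fp [Pfp Lfp]] := conn_flip cp.
  have [l0 [z [b1 [b2 [E1 E2 Dv]]]]] := split_common sg fp fq.
  have Pb1 : path flip z b1 := path_suffix Pfp E1.
  have Pb2 : path flip z b2 := path_suffix Pfq E2.
  have Lb1 : last z b1 = p by rewrite -(last_eq_cat E1).
  have Lb2 : last z b2 = q by rewrite -(last_eq_cat E2).
  have Db1 : forall v, v \in z :: b1 -> D v.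
    move=> v vb; have vf : v \in sg :: fp by rewrite E1 mem_cat vb orbT.
    have [c1 c2] := path_conn Pfp vf; rewrite Lfp in c2.
    by rewrite /D (flip_conn c1) andbT; apply: succT_conn pS (flip_conn c2).
  have Db2 : forall v, v \in z :: b2 -> D v.
    move=> v vb; have vf : v \in sg :: fq by rewrite E2 mem_cat vb orbT.
    have [c1 c2] := path_conn Pfq vf; rewrite Lfq in c2.
    by rewrite /D (flip_conn c1) andbT; apply: succT_conn qS (flip_conn c2).
  have Ub1 := path_uniq flip_rank Pb1.
  have Ub2 := path_uniq flip_rank Pb2.
  have disj : ~~ has (mem b1) b2.
    apply: (diverge_disj Dv) => y0 l1 l2 r1 r2 Eb1 Eb2.
    have yS : y0 \in succT.
      have : y0 \in z :: b1 by rewrite inE Eb1 mem_cat mem_head !orbT.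
      by move/Db1 => /andP [].
    have P1 : path flip z (rcons l1 y0) by move: Pb1; rewrite Eb1 => /path_prefix.
    have P2 : path flip z (rcons l2 y0) by move: Pb2; rewrite Eb2 => /path_prefix.
    have H1 : path arcC (last z (rcons l1 y0)) (rev (belast z (rcons l1 y0))) by rewrite rev_path.
    have H2 : path arcC (last z (rcons l2 y0)) (rev (belast z (rcons l2 y0))) by rewrite rev_path.
    rewrite !last_rcons !belast_rcons in H1 H2.
    have := paths_uniq NO yS H1 H2; rewrite !rev_cons !last_rcons => /(_ erefl).
    by case/rcons_inj => /(congr1 rev); rewrite !revK.
  have Ub : uniq (z :: b1 ++ b2).
    move: Ub1 Ub2; rewrite !cons_uniq mem_cat cat_uniq => /andP [zb1 ->] /andP [zb2 ->].
    by rewrite (negbTE zb1) (negbTE zb2) disj.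
  have AD : all D (z :: b1 ++ b2).
    apply/allP => v; rewrite inE mem_cat => /or3P [/eqP ->|vb|vb].
    - by apply: Db1; rewrite mem_head.
    - by apply: Db1; rewrite inE vb orbT.
    - by apply: Db2; rewrite inE vb orbT.
  have AS : all (fun v => v \in succT) (z :: b1 ++ b2).
    by apply/allP => v /(allP AD) /andP [].
  have lT2 : l \in tops flip (O ++ q :: R') by rewrite Et2 inE.
  have l'T2 : l' \in tops flip (O ++ q :: R') by rewrite Et2 inE.
  have [s' [c' lt]] := surgery flip_rank flip_adj cs2 On ODn Pb1 Pb2 Lb1 Lb2 Ub AD AS lT2 l'T2 Dl Dl' ll'.
  apply: (smaller s' c'); rewrite (up_eq_low c') -hk (up_eq_low cs) -Et2; exact: lt.
rewrite up => t tT; rewrite leqNgt; apply/negP => /card_gt1P [u [u' [Hu Hu' uu']]].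
have cT : forall v, v \in succW C [set t] -> connect arcC t v.
  by move=> v; rewrite inE => /existsP [w /andP [/set1P -> ->]].
move: Hu Hu'; rewrite !in_setI => /andP [/cT cu uT] /andP [/cT cu' u'T].
pose D := fun v => connect arcC t v.
have tS := T_succT tT.
have us : u \in s by move: uT; rewrite inE => /and3P [].
have [l0 l0T] := top_exists flip_rank flip_adj cs.
move: (l0T); rewrite inE /flip => /and3P [l0s an ap].
have [y ys Dy] : exists2 y, y \in s & ~~ D y.
  case Dn: (D (next s l0)); last by exists (next s l0); rewrite ?mem_next ?Dn.
  case Dp: (D (prev s l0)); last by exists (prev s l0); rewrite ?mem_prev ?Dp.
  exfalso; move: Dn Dp; rewrite /D => /connectP [pn Pn En] /connectP [pp Pp Ep].
  have E : rcons pn l0 = rcons pp l0.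
    apply: (paths_uniq NO tS); rewrite ?rcons_path ?Pn ?Pp -?En -?Ep ?an ?ap //.
    by rewrite !last_rcons.
  case/rcons_inj: E => E; move: (next_neq_prev Us Ss l0s); by rewrite En Ep E eqxx.
have [O [q [R' [[cs2 [Et1 Et2]] On ODn Dq Dp]]]] :=
  rot_split (P := fun s2 => cyc s2 /\ tops arcC s2 = tops arcC s /\ tops flip s2 = tops flip s)
    (D := D) (conj cs (conj erefl erefl)) (Prot_ok (s0 := s)) us cu ys Dy.
set p := last q R' in Dp.
case/connectP: (Dq) => fq Pfq Lfq.
case/connectP: (Dp) => fp Pfp Lfp.
have [l1 [z [b1 [b2 [E1 E2 Dv]]]]] := split_common t fp fq.
have Pb1 : path arcC z b1 := path_suffix Pfp E1.
have Pb2 : path arcC z b2 := path_suffix Pfq E2.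
have Lb1 : last z b1 = p by rewrite -(last_eq_cat E1).
have Lb2 : last z b2 = q by rewrite -(last_eq_cat E2).
have Db1 : forall v, v \in z :: b1 -> D v.
  move=> v vb; have vf : v \in t :: fp by rewrite E1 mem_cat vb orbT.
  exact: (path_conn Pfp vf).1.
have Db2 : forall v, v \in z :: b2 -> D v.
  move=> v vb; have vf : v \in t :: fq by rewrite E2 mem_cat vb orbT.
  exact: (path_conn Pfq vf).1.
have zS : z \in succT by apply: succT_conn tS (Db1 z (mem_head _ _)).
have Ub1 := path_uniq arc_rank Pb1.
have Ub2 := path_uniq arc_rank Pb2.
have disj : ~~ has (mem b1) b2.
  apply: (diverge_disj Dv) => y0 m1 m2 r1 r2 Eb1 Eb2.
  have P1 : path arcC z (rcons m1 y0) by move: Pb1; rewrite Eb1 => /path_prefix.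
  have P2 : path arcC z (rcons m2 y0) by move: Pb2; rewrite Eb2 => /path_prefix.
  have := paths_uniq NO zS P1 P2; rewrite !last_rcons => /(_ erefl).
  by case/rcons_inj.
have Ub : uniq (z :: b1 ++ b2).
  move: Ub1 Ub2; rewrite !cons_uniq mem_cat cat_uniq => /andP [zb1 ->] /andP [zb2 ->].
  by rewrite (negbTE zb1) (negbTE zb2) disj.
have AD : all D (z :: b1 ++ b2).
  apply/allP => v; rewrite inE mem_cat => /or3P [/eqP ->|vb|vb].
  - by apply: Db1; rewrite mem_head.
  - by apply: Db1; rewrite inE vb orbT.
  - by apply: Db2; rewrite inE vb orbT.
have AS : all (fun v => v \in succT) (z :: b1 ++ b2).
  by apply/allP => v /(allP AD) /(succT_conn tS).
have uT2 : u \in tops arcC (O ++ q :: R') by rewrite Et1.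
have u'T2 : u' \in tops arcC (O ++ q :: R') by rewrite Et1.
have [s' [c' lt]] := surgery arc_rank arc_adj cs2 On ODn Pb1 Pb2 Lb1 Lb2 Ub AD AS uT2 u'T2 cu cu' uu'.
apply: (smaller s' c'); rewrite -hk -Et1; exact: lt.
Qed.

End Lin.

Theorem lemma3p12 (n : nat) (M : {set {set 'I_n}}) (C : {set {set {set 'I_n}}})
  (T : {set {set 'I_n}}) :
  is_linearization M C -> consistent M C -> simple_lin M C ->
  T \subset Proper M ->
  (exists (VZ : {set {set 'I_n}}) (AZ : {set ({set 'I_n} * {set 'I_n})}),
      [/\ subgraph M C VZ AZ, und_cycle VZ AZ & VZ \subset succW C T]) ->
  exists (VZ : {set {set 'I_n}}) (AZ : {set ({set 'I_n} * {set 'I_n})}),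
    [/\ subgraph M C VZ AZ, und_cycle VZ AZ, VZ \subset succW C T &
      #|upper VZ AZ| = 1 \/
      [/\ (forall s t, s \in Sing n -> t \in T ->
             forall p1 p2, dpath C t p1 s -> dpath C t p2 s -> p1 = p2),
          (forall s, s \in Sing n -> #|predw C s :&: lower VZ AZ| <= 1) &
          (forall t, t \in T -> #|succW C [set t] :&: upper VZ AZ| <= 1)]].
Proof.
move=> HL HC HS HT [VZ [AZ [[_ Hsub] [s [Hu Hsz HV Hanti Hadj]] Hsucc]]].
have cs : cyc C T s.
  rewrite /cyc Hu Hsz /=; apply/andP; split.
    apply: cycle_from_next => // x xs.
    have := Hadj x (next s x); rewrite xs mem_next xs eqxx /=.
    by case/orP => /Hsub [a _ _]; rewrite /adjA a ?orbT.
  by apply/allP => x xs; apply: (subsetP Hsucc); rewrite HV inE.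
exact: (main_ind HL HC HS HT cs erefl).
Qed.
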